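(* Let $G$ be a connected graph with $n\ge2$ vertices, $m$ edges, maximum degree $\Delta$ and minimum degree $\delta$, and assume $\gamma_n=0$. Then: if $G$ is not regular, $$QE(G)\ >\ \frac{2m+\frac12(\Delta-\delta)^2}{2\Delta-\frac{2m}{n}};$$ and if $G$ is regular, $QE(G)\ge n$, with equality if and only if $G\cong K_{\frac n2,\frac n2}$.
   Context: All graphs are finite, simple and undirected. For a graph $G$ with $n$ vertices and $m$ edges, let $q_1\ge\cdots\ge q_n\ge0$ be the eigenvalues of the signless Laplacian $Q(G)=D(G)+A(G)$ ($D(G)$ the diagonal degree matrix, $A(G)$ the adjacency matrix). The signless Laplacian energy is $QE(G)=\sum_{i=1}^n|q_i-\frac{2m}{n}|$. Let $\gamma_1\ge\gamma_2\ge\cdots\ge\gamma_n\ge0$ denote the numbers $|q_i-\frac{2m}{n}|$, $i=1,\dots,n$, arranged in nonincreasing order. *)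

(* Defs.v *)
From HB Require Import structures.
From mathcomp Require Import all_boot all_order all_algebra.
From mathcomp Require Import perm reals.
Set Implicit Arguments. Unset Strict Implicit. Unset Printing Implicit Defensive.
Import Order.TTheory GRing.Theory Num.Theory.
Local Open Scope ring_scope.

Definition simple_graph n (e : rel 'I_n) : Prop := symmetric e /\ irreflexive e.

Definition connected_graph n (e : rel 'I_n) : Prop := forall x y, connect e x y.

Definition deg n (e : rel 'I_n) (x : 'I_n) : nat := #|[set y | e x y]|.

Definition edges n (e : rel 'I_n) : {set {set 'I_n}} :=
  [set E : {set 'I_n} | [exists x, exists y, e x y && (E == [set x; y])]].

Definition nedges n (e : rel 'I_n) : nat := #|edges e|.

Definition maxdeg n (e : rel 'I_n) : nat := \max_(x : 'I_n) deg e x.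
Definition mindeg n (e : rel 'I_n) : nat := \big[minn/n]_(x : 'I_n) deg e x.

Definition regular n (e : rel 'I_n) : Prop := forall x y, deg e x = deg e y.

Definition signlessLap (R : nzRingType) n (e : rel 'I_n) : 'M[R]_n :=
  \matrix_(i, j) ((deg e i)%:R *+ (i == j) + (e i j)%:R).

Definition avgdeg (R : realType) n (e : rel 'I_n) : R :=
  (2 * nedges e)%:R / n%:R.

Definition Qspectrum (R : realType) n (e : rel 'I_n) (s : seq R) : Prop :=
  char_poly (signlessLap R e) = \prod_(x <- s) ('X - x%:P).

Definition QE (R : realType) n (e : rel 'I_n) (s : seq R) : R :=
  \sum_(q <- s) `|q - avgdeg R e|.

(* gamma_1 >= ... >= gamma_n : the |q_i - 2m/n| in nonincreasing order *)
Definition gammas (R : realType) n (e : rel 'I_n) (s : seq R) : seq R :=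
  sort (fun x y : R => y <= x) [seq `|q - avgdeg R e| | q <- s].

Definition gamma_last (R : realType) n (e : rel 'I_n) (s : seq R) : R :=
  nth 0 (gammas e s) n.-1.

Definition graph_iso n (e1 e2 : rel 'I_n) : Prop :=
  exists f : {perm 'I_n}, forall x y, e1 x y = e2 (f x) (f y).

Definition Kbip n (k : nat) : rel 'I_n := fun x y => (x < k)%N != (y < k)%N.

(* Main.v *)
Require Import Defs.
From HB Require Import structures.
From mathcomp Require Import all_boot all_order all_algebra.
From mathcomp Require Import perm reals.
From mathcomp Require Import ring lra zify.
Set Implicit Arguments. Unset Strict Implicit. Unset Printing Implicit Defensive.
Import Order.TTheory GRing.Theory Num.Theory.
Local Open Scope ring_scope.


Section Spec.
Variable R : realType.

Lemma char_poly_eval n (A : 'M[R]_n) t : (char_poly A).[t] = \det (t%:M - A).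
Proof.
rewrite /char_poly -horner_evalE -det_map_mx; congr (\det _).
apply/matrixP=> i j; rewrite !mxE rmorphB /= rmorphMn /= !horner_evalE hornerX hornerC.
by [].
Qed.

Lemma size_spec n (A : 'M[R]_n) s : char_poly A = \prod_(x <- s) ('X - x%:P) -> size s = n.
Proof. by move=> h; have := size_char_poly A; rewrite h size_prod_XsubC => -[]. Qed.

Lemma sum_spec n (A : 'M[R]_n) s : char_poly A = \prod_(x <- s) ('X - x%:P) ->
  \sum_(x <- s) x = \tr A.
Proof.
move=> h; have hs := size_spec h.
case: n A h hs => [|n] A h hs.
  by case: s h hs => // _ _; rewrite big_nil /mxtrace big_ord0.
have := char_poly_trace A (erefl _); rewrite h.
have -> : n.+1.-1 = (size s).-1 by rewrite hs.
rewrite coefPn_prod_XsubC ?hs //.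
by move/eqP; rewrite eqr_opp => /eqP.
Qed.

Lemma det_sq n (A : 'M[R]_n) t :
  \det ((t * t)%:M - A *m A) = \det (t%:M - A) * ((-1) ^+ n * \det ((- t)%:M - A)).
Proof.
rewrite -detZ -det_mulmx; congr (\det _).
rewrite scalerBr scaleN1r scaleN1r opprK.
rewrite (raddfN (@scalar_mx R n)) opprK mulmxDr !mulmxBl.
rewrite mul_mx_scalar mul_scalar_mx scalar_mxM.
by rewrite addrA [A *m t%:M]mul_mx_scalar subrK mul_mx_scalar.
Qed.

Lemma prod_neg (s : seq R) t :
  (-1) ^+ size s * \prod_(x <- s) (- t - x) = \prod_(x <- s) (t + x).
Proof.
elim: s => [|x s IH]; rewrite ?big_nil ?big_cons ?expr0 ?mulr1 //=.
rewrite exprS -IH; ring.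
Qed.

Lemma char_poly_sq n (A : 'M[R]_n) s : char_poly A = \prod_(x <- s) ('X - x%:P) ->
  char_poly (A *m A) = \prod_(x <- s) ('X - (x ^+ 2)%:P).
Proof.
move=> h; have hs := size_spec h.
pose p := char_poly (A *m A) - \prod_(x <- s) ('X - (x ^+ 2)%:P).
suff : p = 0 by move/eqP; rewrite subr_eq0 => /eqP.
pose rs := [seq (i%:R : R) ^+ 2 | i <- iota 0 (size p)].
apply: (@roots_geq_poly_eq0 _ p rs); last by rewrite size_map size_iota.
- apply/allP => _ /mapP [i _ ->]; rewrite /root /p hornerD hornerN.
  rewrite char_poly_eval expr2 det_sq -!char_poly_eval h !horner_prod.
  under eq_bigr do rewrite hornerXsubC.
  under [X in _ * (_ * X)]eq_bigr do rewrite hornerXsubC.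
  under [X in _ - X]eq_bigr do rewrite hornerXsubC.
  rewrite -hs prod_neg -big_split /= subr_eq0; apply/eqP/eq_bigr => x _; ring.
- rewrite map_inj_uniq ?iota_uniq // => i j /eqP.
  by rewrite -!natrX eqr_nat eqn_exp2r // => /eqP.
Qed.
End Spec.


Section Hand.
Variable n : nat.
Variable e : rel 'I_n.
Hypothesis esym : symmetric e.
Hypothesis eirr : irreflexive e.

Lemma deg_edges x : deg e x = #|[set E in edges e | x \in E]|.
Proof.
have -> : [set E in edges e | x \in E] = (fun y => [set x; y]) @: [set y | e x y].
  apply/setP => E; rewrite inE; apply/andP/imsetP; last first.
    move=> [y]; rewrite inE => hxy ->; split; last by rewrite !inE eqxx.
    by rewrite inE; apply/existsP; exists x; apply/existsP; exists y; rewrite hxy eqxx.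
  rewrite inE => -[/existsP [a /existsP [b /andP [hab /eqP ->]]]].
  rewrite !inE => /orP [/eqP ->|/eqP ->].
    by exists b; rewrite ?inE.
  by exists a; rewrite ?inE 1?esym // setUC.
rewrite /deg card_in_imset //.
move=> y1 y2; rewrite !inE => h1 h2 heq.
have : y1 \in [set x; y2] by rewrite -heq !inE eqxx orbT.
rewrite !inE => /orP [/eqP hx|/eqP //].
by move: h1; rewrite -hx eirr.
Qed.

Lemma handshake : (\sum_x deg e x = 2 * nedges e)%N.
Proof.
under eq_bigr do rewrite deg_edges -sum1_card.
rewrite (eq_bigr (fun x => \sum_E (if (E \in edges e) && (x \in E) then 1 else 0))%N); last first.
  by move=> x _; rewrite big_mkcond; apply: eq_bigr => E _; rewrite inE.
rewrite exchange_big /nedges -sum1_card big_mkcond big_distrr /=.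
rewrite [RHS]big_mkcond; apply: eq_bigr => E _; case: ifP => hE; last by rewrite big1 // => x _; rewrite andFb.
rewrite muln1 (eq_bigr (fun x => if x \in E then 1 else 0)%N); last by move=> x _; rewrite andTb.
rewrite -big_mkcond sum1_card.
move: hE; rewrite inE => /existsP [a /existsP [b /andP [hab /eqP ->]]].
rewrite cards2; case: (eqVneq a b) hab => [->|//]; by rewrite eirr.
Qed.
End Hand.


Lemma bigmin_le (I : eqType) (r : seq I) (F : I -> nat) k x :
  x \in r -> (\big[minn/k]_(i <- r) F i <= F x)%N.
Proof.
elim: r => [//|y r IH]; rewrite inE big_cons => /orP [/eqP ->|/IH h].
  exact: geq_minl.
exact: leq_trans (geq_minr _ _) h.
Qed.

Lemma bigmin_eq (I : eqType) (r : seq I) (F : I -> nat) k :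
  r != [::] -> (forall x, F x <= k)%N -> exists2 x, x \in r & \big[minn/k]_(i <- r) F i = F x.
Proof.
move=> + hk; elim: r => [//|y r IH] _; rewrite big_cons.
case: (eqVneq r [::]) => [->|/IH [x hx ->]].
  by exists y; rewrite ?inE ?eqxx // big_nil; apply/minn_idPl.
case: (leqP (F y) (F x)) => h.
  by exists y; rewrite ?inE ?eqxx //; apply/minn_idPl.
by exists x; rewrite ?inE ?hx ?orbT //; apply/minn_idPr/ltnW.
Qed.

Lemma conn_closed n (e : rel 'I_n) (P : pred 'I_n) :
  (forall a b, P a -> e a b -> P b) -> forall x y, connect e x y -> P x -> P y.
Proof.
move=> hP x y /connectP [p hp ->]; elim: p x hp => [//|z p IH] x /=.
by case/andP => hxz hp hx; apply: IH hp (hP _ _ hx hxz).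
Qed.

Lemma sq_bound1 (R : realFieldType) (w x : R) : x ^+ 2 <= w ^+ 2 -> w * x <= w ^+ 2.
Proof. move=> h; have := sqr_ge0 (w - x); rewrite sqrrB; lra. Qed.

Lemma sq_bound2 (R : realFieldType) (w x : R) : x ^+ 2 <= w ^+ 2 -> - w ^+ 2 <= w * x.
Proof. move=> h; have := sqr_ge0 (w + x); rewrite sqrrD; lra. Qed.

Section Graph.
Variable R : realType.
Variable n : nat.
Variable e : rel 'I_n.
Hypothesis esym : symmetric e.
Hypothesis eirr : irreflexive e.

Local Notation Q := (signlessLap R e).
Local Notation d x := ((deg e x)%:R : R).

Lemma deg_sum k : \sum_i ((e k i)%:R : R) = d k.
Proof.
rewrite /deg -sum1_card natr_sum [RHS]big_mkcond /=; apply: eq_bigr => i _.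
by rewrite inE; case: (e k i).
Qed.

Lemma deg_sum' k : \sum_i ((e i k)%:R : R) = d k.
Proof. by rewrite -deg_sum; apply: eq_bigr => i _; rewrite esym. Qed.

Lemma Qsym : Q^T = Q.
Proof.
apply/matrixP => i j; rewrite !mxE esym; case: (eqVneq i j) => [->|] //=.
Qed.

Lemma Qentry i j : Q i j = if i == j then d i else (e i j)%:R.
Proof.
rewrite mxE; case: (eqVneq i j) => [->|_]; last by rewrite mulr0n add0r.
by rewrite eirr addr0.
Qed.

Lemma trQ : \tr Q = \sum_i d i.
Proof. by apply: eq_bigr => i _; rewrite Qentry eqxx. Qed.

Lemma trQQ : \tr (Q *m Q) = \sum_i (d i ^+ 2 + d i).
Proof.
apply: eq_bigr => i _; rewrite mxE (bigD1 i) //= !Qentry eqxx -expr2.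
congr (_ + _); rewrite -deg_sum [in RHS](bigD1 i) //= eirr add0r.
apply: eq_bigr => j /negPf hj; rewrite !Qentry hj eq_sym hj esym.
by case: (e j i); rewrite ?mulr1 ?mulr0.
Qed.

Lemma vQ (v : 'rV[R]_n) k :
  (v *m Q) 0 k = d k * v 0 k + \sum_i (e i k)%:R * v 0 i.
Proof.
rewrite mxE (bigD1 k) //= [X in _ = _ + X](bigD1 k) //= eirr mul0r add0r.
rewrite Qentry eqxx mulrC; congr (_ + _); apply: eq_bigr => j /negPf hj.
by rewrite Qentry hj mulrC.
Qed.

Lemma gersh (v : 'rV[R]_n) q k : v *m Q = q *: v ->
  (forall i, v 0 i ^+ 2 <= v 0 k ^+ 2) -> v 0 k != 0 ->
  [/\ 0 <= q, q <= 2 * d k & (q = 2 * d k -> forall i, e i k -> v 0 i = v 0 k)].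
Proof.
move=> H hmax hk0; have hk : (v *m Q) 0 k = (q *: v) 0 k by rewrite H.
rewrite vQ mxE in hk.
set w := v 0 k in hk hmax hk0 *.
have hw : 0 < w ^+ 2 by rewrite lt_def sqrf_eq0 hk0 sqr_ge0.
have key : q * w ^+ 2 = d k * w ^+ 2 + \sum_i (e i k)%:R * (w * v 0 i).
  rewrite expr2 mulrA -hk mulrDl; congr (_ + _); first by ring.
  rewrite mulr_suml; apply: eq_bigr => i _; ring.
have hup : \sum_i (e i k)%:R * (w * v 0 i) <= d k * w ^+ 2.
  rewrite -deg_sum' mulr_suml; apply: ler_sum => i _.
  case: (e i k); rewrite ?mul0r ?mul1r //; exact: sq_bound1.
have hlo : - (d k * w ^+ 2) <= \sum_i (e i k)%:R * (w * v 0 i).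
  rewrite -deg_sum' mulr_suml -sumrN; apply: ler_sum => i _.
  case: (e i k); rewrite ?mul0r ?mul1r ?oppr0 //; exact: sq_bound2.
split.
- have : 0 <= q * w ^+ 2 by lra.
  by rewrite pmulr_lge0.
- have : q * w ^+ 2 <= (2 * d k) * w ^+ 2 by rewrite -mulrA; lra.
  by rewrite ler_pM2r.
- move=> hq i hik.
  have h0 : \sum_i (e i k)%:R * (w ^+ 2 - w * v 0 i) = 0.
    rewrite (eq_bigr (fun i => (e i k)%:R * w ^+ 2 - (e i k)%:R * (w * v 0 i))).
      rewrite sumrB -mulr_suml deg_sum'; move: key; rewrite hq -mulrA; lra.
    by move=> j _; ring.
  have hnn : forall j, true -> 0 <= (e j k)%:R * (w ^+ 2 - w * v 0 j).
    move=> j _; case: (e j k); rewrite ?mul0r ?mul1r //; rewrite subr_ge0; exact: sq_bound1.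
  have := psumr_eq0P hnn h0 (i := i) isT; rewrite hik mul1r.
  move/eqP; rewrite subr_eq0 expr2 => /eqP h1.
  by apply: (mulfI hk0).
Qed.

Lemma eigen_max (v : 'rV[R]_n) : v != 0 ->
  exists k, (forall i, v 0 i ^+ 2 <= v 0 k ^+ 2) /\ v 0 k != 0.
Proof.
move=> hv; have [i0 hi0] : exists i, v 0 i != 0.
  apply/existsP; apply: contraNT hv; rewrite negb_exists => /forallP h.
  by apply/eqP/rowP => i; rewrite mxE; apply/eqP; move: (h i); rewrite negbK.
case: (@arg_maxP _ _ _ i0 xpredT (fun i => v 0 i ^+ 2) isT) => k _ hk.
exists k; split; first by move=> i; exact: hk.
apply: contraNneq hi0 => h0; have := hk i0 isT; rewrite h0 expr0n /= => h.
by rewrite -sqrf_eq0 eq_le h sqr_ge0.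
Qed.

Lemma spec_eigen (s : seq R) q : char_poly Q = \prod_(x <- s) ('X - x%:P) ->
  q \in s -> exists2 v : 'rV_n, v *m Q = q *: v & v != 0.
Proof.
move=> h hq; apply/eigenvalueP; rewrite eigenvalue_root_char h root_prod_XsubC //.
Qed.

Lemma deg_le_max x : d x <= (maxdeg e)%:R.
Proof. by rewrite ler_nat; apply: leq_bigmax. Qed.

Lemma spec_range (s : seq R) q : char_poly Q = \prod_(x <- s) ('X - x%:P) ->
  q \in s -> 0 <= q /\ q <= 2 * (maxdeg e)%:R.
Proof.
move=> h hq; have [v hv v0] := spec_eigen h hq; have [k [hk1 hk2]] := eigen_max v0.
have [h1 h2 _] := gersh hv hk1 hk2; split => //.
by apply: le_trans h2 _; rewrite ler_pM2l ?ltr0n // deg_le_max.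
Qed.

Lemma top_regular (s : seq R) q : connected_graph e ->
  char_poly Q = \prod_(x <- s) ('X - x%:P) ->
  q \in s -> q = 2 * (maxdeg e)%:R -> regular e.
Proof.
move=> hc h hq hqD; have [v hv v0] := spec_eigen h hq; have [k [hk1 hk2]] := eigen_max v0.
pose P := [pred i | v 0 i == v 0 k].
have hP : forall i, P i -> d i = (maxdeg e)%:R /\ forall j, e j i -> v 0 j = v 0 i.
  move=> i /eqP hi; have hi1 : forall j, v 0 j ^+ 2 <= v 0 i ^+ 2 by rewrite hi.
  have hi2 : v 0 i != 0 by rewrite hi.
  have [_ h2 h3] := gersh hv hi1 hi2.
  have hd : d i = (maxdeg e)%:R.
    apply/eqP; rewrite eq_le deg_le_max /=; move: h2; rewrite hqD; lra.
  by split => //; apply: h3; rewrite hqD hd.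
have hall : forall x, P x.
  move=> x; apply: (conn_closed (P := P)) (hc k x) _; last by rewrite /= eqxx.
  move=> a b ha hab; have [_ h3] := hP a ha; rewrite /= h3; first exact: ha.
  by rewrite esym.
move=> x y; have [hx _] := hP x (hall x); have [hy _] := hP y (hall y).
by apply/eqP; rewrite -(eqr_nat R) hx hy.
Qed.
End Graph.


Section Ker.
Variable R : realType.
Variable m : nat.

Lemma ker_sq (S W : 'M[R]_m.+1) : S^T = S -> S * (S * W) = 0 -> S * W = 0.
Proof.
move=> hS h; set X := S * W.
have h0 : X^T * X = 0.
  have -> : X^T * X = W^T * (S * (S * W)) by rewrite /X -!mulmxE trmx_mul hS !mulmxA.
  by rewrite h mulr0.
have ht : \tr (X^T * X) = \sum_i \sum_j X j i ^+ 2.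
  by apply: eq_bigr => i _; rewrite -mulmxE mxE; apply: eq_bigr => j _; rewrite mxE expr2.
rewrite h0 mxtrace0 in ht.
apply/matrixP => j i; rewrite [RHS]mxE.
have hnn : forall i, true -> 0 <= \sum_j X j i ^+ 2 by move=> i' _; apply: sumr_ge0 => j' _; exact: sqr_ge0.
have := psumr_eq0P hnn (esym ht) (i := i) isT.
move=> h2; have hnn2 : forall j, true -> 0 <= X j i ^+ 2 by move=> j' _; exact: sqr_ge0.
have := psumr_eq0P hnn2 h2 (i := j) isT.
by move/eqP; rewrite sqrf_eq0 => /eqP.
Qed.

Lemma horner_mx_comm (A : 'M[R]_m.+1) p q : horner_mx A p * horner_mx A q = horner_mx A q * horner_mx A p.
Proof. by rewrite -!rmorphM mulrC. Qed.

Lemma reduce3 (A : 'M[R]_m.+1) (N : {poly R}) (l : seq R) : A^T = A ->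
  all (root N) l -> forall W,
  horner_mx A (\prod_(x <- l) ('X - x%:P)) * W = 0 -> horner_mx A N * W = 0.
Proof.
move=> hA; elim: l => [|x l IH] /= => [_ W|/andP [hx hl] W].
  by rewrite big_nil rmorph1 mul1r => ->; rewrite mulr0.
rewrite big_cons mulrC rmorphM -mulrA => /(IH hl).
have [N' ->] := factor_theorem _ _ hx.
set S := horner_mx A ('X - x%:P).
have hS : S^T = S.
  by rewrite /S rmorphB /= horner_mx_X horner_mx_C linearB /= tr_scalar_mx hA.
rewrite rmorphM -/S => h.
set C := horner_mx A N'.
have hC : C * S = S * C by rewrite /C /S horner_mx_comm.
have : S * (S * (C * W)) = 0.
  rewrite !mulrA -(mulrA S S C) -hC mulrA -hC.
  by move: h; rewrite !mulrA.
move/(ker_sq hS) => h2.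
by rewrite hC -mulrA.
Qed.
End Ker.

Lemma half_pos k : (0 < k)%N -> (0 < k.+1./2)%N.
Proof. by case: k. Qed.

Section Struct.
Variable R : realType.
Variable m : nat.
Local Notation n := m.+1.
Variable e : rel 'I_n.
Hypothesis esym : symmetric e.
Hypothesis eirr : irreflexive e.
Variable r : nat.
Hypothesis hreg : forall x, deg e x = r.

Local Notation Q := (signlessLap R e).
Definition adj : 'M[R]_n := \matrix_(i, j) (e i j)%:R.
Local Notation A := adj.
Local Notation c := ((r%:R : R)%:P).

Lemma hornerY : horner_mx Q ('X - c) = A.
Proof.
rewrite rmorphB /= horner_mx_X horner_mx_C; apply/matrixP => i j.
rewrite !mxE hreg; case: (eqVneq i j) => [->|hij]; first by rewrite eirr addr0 subrr.
by rewrite mulr0n subr0 add0r.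
Qed.

Lemma AA a j : (A * A) a j = #|[set b | e a b & e j b]|%:R.
Proof.
rewrite -mulmxE mxE -sum1_card natr_sum [RHS]big_mkcond; apply: eq_bigr => b _.
by rewrite !mxE inE (esym b j); case: (e a b); case: (e j b); rewrite ?mulr0 ?mulr1.
Qed.

Lemma Asym : A^T = A.
Proof. by apply/matrixP => i j; rewrite !mxE esym. Qed.

Lemma A3 (s : seq R) : char_poly Q = \prod_(x <- s) ('X - x%:P) ->
  (forall q, q \in s -> q * (q - r%:R) * (q - (r%:R + r%:R)) = 0) ->
  A * A * A = (r%:R ^+ 2)%:M * A.
Proof.
move=> h hq.
have hN : all (root ('X * ('X - c) * ('X - (c + c)))) s.
  apply/allP => q /hq; rewrite /root !hornerE => ->; by rewrite eqxx.
have := reduce3 (W := 1) (Qsym R esym) hN; rewrite -h Cayley_Hamilton mul0r mulr1 => /(_ erefl).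
have -> : 'X * ('X - c) * ('X - (c + c)) = ('X - c) * ('X - c) * ('X - c) - (r%:R ^+ 2)%:P * ('X - c).
  by rewrite rmorphXn; ring.
rewrite rmorphB !rmorphM /= hornerY horner_mx_C => /eqP; rewrite subr_eq0 => /eqP.
by [].
Qed.

Definition NB x := [set y | e x y].

Lemma card_NB x : #|NB x| = r.
Proof. by rewrite -(hreg x). Qed.

Lemma nbr_eq : A * A * A = (r%:R ^+ 2)%:M * A ->
  forall i j a, e i j -> e a j -> NB a = NB i.
Proof.
move=> hA i j a hij haj.
have hent : \sum_b (#|[set y | e i y & e b y]|%:R : R) * (e b j)%:R = r%:R ^+ 2.
  have := congr1 (fun M : 'M[R]_n => M i j) hA.
  rewrite -[in RHS]mulmxE mul_scalar_mx mxE [in RHS]mxE mxE hij mulr1 => <-.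
  by apply: eq_bigr => b _; rewrite AA mxE.
have hdj := deg_sum' R esym j; rewrite hreg in hdj.
set c := fun b => #|[set y | e i y & e b y]|.
have hc : forall b, (c b <= r)%N.
  move=> b; rewrite -(card_NB i); apply: subset_leq_card; apply/subsetP => y.
  by rewrite !inE => /andP [].
have h0 : \sum_b (e b j)%:R * ((r%:R : R) - (c b)%:R) = 0.
  rewrite (eq_bigr (fun b => (e b j)%:R * (r%:R : R) - (c b)%:R * (e b j)%:R)); last by move=> b _; ring.
  by rewrite sumrB -mulr_suml hdj hent expr2 subrr.
have hnn : forall b, true -> 0 <= ((e b j)%:R : R) * ((r%:R : R) - (c b)%:R).
  by move=> b _; apply: mulr_ge0; rewrite ?ler0n // subr_ge0 ler_nat.
have := psumr_eq0P hnn h0 (i := a) isT; rewrite haj mul1r => /eqP.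
rewrite subr_eq0 eqr_nat => /eqP hca.
have hS1 : [set y | e i y & e a y] = NB i.
  apply/eqP; rewrite eqEcard -/(c a) -hca card_NB leqnn andbT.
  by apply/subsetP => y; rewrite !inE => /andP [].
have hS2 : [set y | e i y & e a y] = NB a.
  apply/eqP; rewrite eqEcard -/(c a) -hca card_NB leqnn andbT.
  by apply/subsetP => y; rewrite !inE => /andP [].
by rewrite -hS2 hS1.
Qed.

Lemma bip_struct : (forall i j a, e i j -> e a j -> NB a = NB i) ->
  connected_graph e -> (0 < r)%N -> ~~ odd n /\ graph_iso e (@Kbip n n./2).
Proof.
move=> H hc hr.
have [y0 hy0] : exists y, e ord0 y.
  have : (0 < #|NB ord0|)%N by rewrite card_NB.
  by rewrite card_gt0 => /set0Pn [y]; rewrite inE => hy; exists y.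
set X := NB y0; set Y := NB ord0.
have hY : forall a, e ord0 a -> NB a = X.
  by move=> a ha; apply: (H y0 ord0 a); rewrite esym.
have hX : forall x, e y0 x -> NB x = Y.
  by move=> x hx; apply: (H ord0 y0 x) => //; rewrite esym.
have hcov : forall z, (z \in X) || (z \in Y).
  move=> z; apply: (conn_closed (P := [pred z | (z \in X) || (z \in Y)])) (hc ord0 z) _.
    move=> a b /=; rewrite !inE => /orP [ha|ha] hab.
      by move: (hX a ha) => /setP /(_ b); rewrite !inE hab => <-; rewrite orbT.
    by move: (hY a ha) => /setP /(_ b); rewrite !inE hab => <-.
  by rewrite /= !inE esym hy0.
have hdis : forall z, (z \in Y) = (z \notin X).
  move=> z; have := hcov z; case hzX : (z \in X); case hzY : (z \in Y) => //= _.
  move: hzX hzY; rewrite !inE => hzX hzY.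
  have := hX z hzX; rewrite (hY z hzY) => hXY.
  have : z \in NB z by rewrite (hY z hzY) /X inE.
  by rewrite inE eirr.
have hE : forall u v, e u v = ((u \in X) != (v \in X)).
  move=> u v; case huX : (u \in X).
    have huX' : e y0 u by move: huX; rewrite /X inE.
    move: (hX u huX') => /setP /(_ v); rewrite [v \in NB u]inE => ->.
    by rewrite hdis.
  have huY : u \in Y by rewrite hdis huX.
  have huY' : e ord0 u by move: huY; rewrite /Y inE.
  by move: (hY u huY') => /setP /(_ v); rewrite [v \in NB u]inE => ->; by case: (v \in X).
have hcY : Y = ~: X by apply/setP => z; rewrite [in RHS]inE -hdis.
have hn : (r + r = n)%N.
  by rewrite -{1}(card_NB y0) -(card_NB ord0) -/X -/Y hcY cardsC card_ord.
have hXr : #|X| = r := card_NB y0.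
have hXc : #|~: X| = r by rewrite -hcY card_NB.
have hhalf : n./2 = r by rewrite -hn addnn doubleK.
split; first by rewrite -hn addnn odd_double.
pose t := enum X ++ enum (~: X).
have ht : size t = n by rewrite size_cat -!cardE hXr hXc.
have hu : uniq t.
  rewrite cat_uniq !enum_uniq andbT /=; apply/hasPn => z.
  by rewrite !mem_enum inE => hz; apply/negP => hz2; move: hz; rewrite hz2.
pose g := fun i : 'I_n => nth ord0 t i.
have ginj : injective g.
  move=> i j /eqP; rewrite /g nth_uniq ?ht ?ltn_ord // => /eqP; apply: val_inj.
pose p := perm ginj.
have hp : forall a : 'I_n, (p a \in X) = (a < r)%N.
  move=> a; rewrite permE /g nth_cat -cardE hXr; case: ltnP => ha.
    have := mem_nth ord0 (_ : (a < size (enum X))%N); rewrite mem_enum; apply.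
    by rewrite -cardE hXr.
  apply/negbTE.
  have : nth ord0 (enum (~: X)) (a - r) \in enum (~: X).
    apply: mem_nth; rewrite -cardE hXc; have := ltn_ord a; move: hn; lia.
  by rewrite mem_enum inE.
exists (p^-1)%g => x y; rewrite /Kbip hhalf -(hp ((p^-1)%g x)) -(hp ((p^-1)%g y)) !permKV hE.
by [].
Qed.

Lemma iso_roots (s : seq R) q : char_poly Q = \prod_(x <- s) ('X - x%:P) -> q \in s ->
  (0 < m)%N -> graph_iso e (@Kbip n n./2) ->
  q * (q - r%:R) * (q - (r%:R + r%:R)) = 0.
Proof.
move=> h hq hm [f hf].
pose P := fun x : 'I_n => (f x < n./2)%N.
have hE : forall x y, e x y = (P x != P y) by move=> x y; rewrite hf.
have [v hv v0] := spec_eigen h hq.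
set S1 := \sum_(i | P i) v 0 i; set S2 := \sum_(i | ~~ P i) v 0 i.
set t := q - r%:R.
have hrow : forall j, t * v 0 j = if P j then S2 else S1.
  move=> j; have : (v *m Q) 0 j = (q *: v) 0 j by rewrite hv.
  rewrite (vQ eirr) mxE hreg => hj.
  have -> : t * v 0 j = \sum_i (e i j)%:R * v 0 i by rewrite /t; lra.
  rewrite (eq_bigr (fun i => if P i != P j then v 0 i else 0)); last first.
    by move=> i _; rewrite hE; case: (_ != _); rewrite ?mul1r ?mul0r.
  rewrite -big_mkcond /=; case hPj : (P j).
    by rewrite /S2; apply: eq_bigl => i; case: (P i).
  by rewrite /S1; apply: eq_bigl => i; case: (P i).
have hcard : forall b, (exists j, P j = b) -> #|[pred y | P y != b]| = r.
  move=> b [j hj]; rewrite -(hreg j) /deg cardsE; apply: eq_card => y.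
  by rewrite !inE -[y \in e j]/(e j y) hE hj eq_sym.
have hPj : exists j, P j = true.
  by exists ((f^-1)%g ord0); rewrite /P permKV /=; apply: half_pos.
have hNj : exists j, P j = false.
  exists ((f^-1)%g ord_max); rewrite /P permKV /=; apply/negbTE; rewrite -leqNgt.
  rewrite uphalf_half; have := odd_double_half m; rewrite -addnn; lia.
have hcP := hcard false hNj; have hcN := hcard true hPj.
have e1 : t * S1 = r%:R * S2.
  rewrite /S1 mulr_sumr (eq_bigr (fun _ => S2)); last by move=> i hi; rewrite hrow hi.
  rewrite sumr_const mulr_natl; congr (_ *+ _).
  rewrite -hcP; apply: eq_card => y; rewrite !inE unfold_in; change (P y = (P y != false)); by case: (P y).
have e2 : t * S2 = r%:R * S1.
  rewrite /S2 mulr_sumr (eq_bigr (fun _ => S1)); last by move=> i /negbTE hi; rewrite hrow hi.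
  rewrite sumr_const mulr_natl; congr (_ *+ _).
  rewrite -hcN; apply: eq_card => y; rewrite !inE unfold_in; change (~~ P y = (P y != true)); by case: (P y).
have z1 : (t ^+ 2 - r%:R ^+ 2) * S1 = 0.
  have : t * (t * S1) = r%:R * (t * S2) by rewrite e1; ring.
  rewrite e2 => h1; rewrite mulrBl -mulrA; rewrite expr2 -mulrA h1; ring.
have z2 : (t ^+ 2 - r%:R ^+ 2) * S2 = 0.
  have : t * (t * S2) = r%:R * (t * S1) by rewrite e2; ring.
  rewrite e1 => h1; rewrite mulrBl -mulrA; rewrite expr2 -mulrA h1; ring.
have [k hk] : exists k, v 0 k != 0.
  apply/existsP; apply: contraNT v0; rewrite negb_exists => /forallP hh.
  by apply/eqP/rowP => i; rewrite mxE; apply/eqP; move: (hh i); rewrite negbK.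
have : (t * (t ^+ 2 - r%:R ^+ 2)) * v 0 k = 0.
  rewrite mulrAC hrow mulrC; case: (P k); [exact: z2 | exact: z1].
move/eqP; rewrite mulf_eq0 (negbTE hk) orbF => /eqP h0.
by rewrite /t in h0 *; rewrite -h0; ring.
Qed.
End Struct.


Section Nm.
Variable R : realType.

Lemma sq_exp (l : seq R) a :
  \sum_(x <- l) (x - a) ^+ 2 = \sum_(x <- l) x ^+ 2 - 2 * a * \sum_(x <- l) x + (size l)%:R * a ^+ 2.
Proof.
elim: l => [|x l IH]; first by rewrite !big_nil /=; ring.
rewrite !big_cons IH /= -addn1 natrD; ring.
Qed.

Lemma sq_expI n (F : 'I_n -> R) a :
  \sum_i (F i - a) ^+ 2 = \sum_i F i ^+ 2 - 2 * a * \sum_i F i + n%:R * a ^+ 2.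
Proof.
rewrite (eq_bigr (fun i => F i ^+ 2 - 2 * a * F i + a ^+ 2)); last by move=> i _; ring.
rewrite big_split sumrB /= -mulr_sumr sumr_const card_ord mulr_natl.
by rewrite mulr_natl.
Qed.

Lemma abs_sum (l : seq R) (F : R -> R) B : (forall x, x \in l -> `|F x| <= B) ->
  B * \sum_(x <- l) `|F x| - \sum_(x <- l) F x ^+ 2 = \sum_(x <- l) `|F x| * (B - `|F x|).
Proof.
move=> _; rewrite mulr_sumr -sumrB; apply: eq_bigr => x _.
by rewrite -(real_normK (num_real (F x))); ring.
Qed.

Lemma abs_sum_ge0 (l : seq R) (F : R -> R) B : (forall x, x \in l -> `|F x| <= B) ->
  0 <= \sum_(x <- l) `|F x| * (B - `|F x|).
Proof.
move=> h; rewrite big_seq; apply: sumr_ge0 => x hx.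
by apply: mulr_ge0; rewrite ?normr_ge0 // subr_ge0 h.
Qed.

Lemma abs_sum_eq0 (l : seq R) (F : R -> R) B : (forall x, x \in l -> `|F x| <= B) ->
  \sum_(x <- l) `|F x| * (B - `|F x|) = 0 -> forall x, x \in l -> `|F x| * (B - `|F x|) = 0.
Proof.
move=> h; rewrite big_seq => /eqP; rewrite psumr_eq0.
  by move=> /allP hall x hx; apply/eqP; have := hall x hx; rewrite hx.
move=> x hx; apply: mulr_ge0; rewrite ?normr_ge0 // subr_ge0 h //.
Qed.
End Nm.


Lemma deg_pos m (e : rel 'I_m.+1) : (0 < m)%N -> connected_graph e -> forall x, (0 < deg e x)%N.
Proof.
move=> hm hc x.
pose y : 'I_m.+1 := if x == ord0 then ord_max else ord0.
have hyx : y != x.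
  rewrite /y; case: (eqVneq x ord0) => [->|hx]; last by rewrite eq_sym.
  by apply/eqP => /(congr1 val) /= h; move: hm; rewrite h.
have := hc x y; move/connectP => [p hp hl].
case: p hp hl => [_ hl|z p /= /andP [hxz _] _]; first by move: hyx; rewrite hl eqxx.
by apply/card_gt0P; exists z; rewrite inE.
Qed.

Lemma L3 (R : realType) (x r : R) : `|x| * (r - `|x|) = 0 -> x * (x ^+ 2 - r ^+ 2) = 0.
Proof.
move/eqP; rewrite mulf_eq0 => /orP [/eqP h|]; first by move: h => /normr0P/eqP ->; ring.
rewrite subr_eq0 => /eqP ->; rewrite real_normK ?num_real //; ring.
Qed.

Lemma L4 (R : realType) (x r : R) : 0 <= r -> x * (x ^+ 2 - r ^+ 2) = 0 -> `|x| * (r - `|x|) = 0.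
Proof.
move=> hr /eqP; rewrite mulf_eq0 => /orP [/eqP ->|]; first by rewrite normr0 mul0r.
rewrite subr_eq0 -(real_normK (num_real x)) eqrXn2 ?normr_ge0 // => /eqP ->.
by rewrite subrr mulr0.
Qed.

Theorem mainTheorem11 (R : realType) (n : nat) (e : rel 'I_n) (s : seq R) :
  (2 <= n)%N -> simple_graph e -> connected_graph e ->
  Qspectrum e s -> gamma_last e s = 0 ->
  (~ regular e ->
     QE e s > ((2 * nedges e)%:R + 2^-1 * ((maxdeg e)%:R - (mindeg e)%:R) ^+ 2)
              / (2 * (maxdeg e)%:R - avgdeg R e)) /\
  (regular e ->
     QE e s >= n%:R /\
     (QE e s = n%:R <-> (~~ odd n /\ graph_iso e (@Kbip n n./2)))).
Proof.
case: n e s => [//|m] e s hn [esym eirr] hc hQ _.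
have hm : (0 < m)%N by [].
rewrite /Qspectrum in hQ.
have hsz := size_spec hQ.
set a := avgdeg R e.
set D : R := (2 * nedges e)%:R.
have hD : \sum_i ((deg e i)%:R : R) = D by rewrite /D -(handshake esym eirr) natr_sum.
have hsum : \sum_(x <- s) x = D by rewrite (sum_spec hQ) (trQ R eirr) hD.
have hsq : \sum_(x <- s) x ^+ 2 = \sum_i (((deg e i)%:R : R) ^+ 2 + (deg e i)%:R).
  have h2 := char_poly_sq hQ.
  rewrite -(big_map (fun x => x ^+ 2) xpredT (fun y => 'X - y%:P)) in h2.
  by rewrite -(big_map (fun x => x ^+ 2) xpredT id) (sum_spec h2) (trQQ R esym eirr).
have hna : m.+1%:R * a = D by rewrite /a /avgdeg mulrC divfK // pnatr_eq0.
have hM : \sum_(x <- s) (x - a) ^+ 2 = D + \sum_i (((deg e i)%:R : R) - a) ^+ 2.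
  rewrite sq_exp sq_expI hsz hsq big_split /= hD hsum; ring.
have hdpos := deg_pos hm hc.
have hDpos : 0 < D.
  rewrite -hD (bigD1 ord0) //= ltr_pwDl ?ltr0n ?hdpos //.
  by apply: sumr_ge0 => i _; rewrite ler0n.
have hQE : QE e s = \sum_(q <- s) `|q - a| by [].
have hdle : forall x, (deg e x <= m.+1)%N.
  by move=> x; apply: leq_trans (max_card _) _; rewrite card_ord.
split.
- move=> hnr.
  have hcard : (0 < #|{: 'I_m.+1}|)%N by rewrite card_ord.
  have [imax himax] := bigop.eq_bigmax (fun x => deg e x) hcard.
  have hne0 : index_enum 'I_m.+1 != [::].
    by apply/eqP => h; move: (mem_index_enum (@ord0 m)); rewrite h.
  have [imin _ himin] := @bigmin_eq _ (index_enum 'I_m.+1) (fun x => deg e x) m.+1 hne0 hdle.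
  rewrite -/(maxdeg e) in himax; rewrite -/(mindeg e) in himin.
  have [z hz] : exists z, (deg e z < maxdeg e)%N.
    case: (boolP [exists z, (deg e z < maxdeg e)%N]) => [/existsP //|/existsPn h].
    exfalso; apply: hnr => x y.
    have hx : forall x, deg e x = maxdeg e.
      by move=> w; apply/eqP; rewrite eqn_leq leq_bigmax /= leqNgt h.
    by rewrite !hx.
  set Dl : R := (maxdeg e)%:R.
  have ha : a < Dl.
    have : m.+1%:R * a < m.+1%:R * Dl.
      have hs : \sum_(i < m.+1) Dl = m.+1%:R * Dl by rewrite sumr_const card_ord mulr_natl.
      rewrite hna -hD -hs (bigD1 z) //= [X in _ < X](bigD1 z) //= ltr_leD ?ltr_nat //.
      by apply: ler_sum => i _; exact: deg_le_max.
    by rewrite ltr_pM2l ?ltr0n.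
  have ha0 : 0 <= a by rewrite /a /avgdeg divr_ge0 ?ler0n.
  set B := 2 * Dl - a.
  have hB : 0 < B by rewrite /B; lra.
  have hlt : forall q, q \in s -> `|q - a| < B.
    move=> q hq; have [h0 h1] := spec_range esym eirr hQ hq.
    have h2 : q != 2 * Dl.
      by apply/eqP => hq2; apply: hnr; apply: (top_regular esym eirr hc hQ hq hq2).
    have h3 : q < 2 * Dl by rewrite lt_def eq_sym h2 h1.
    by rewrite ltr_norml /B; apply/andP; split; lra.
  have hle : forall q, q \in s -> `|(fun q => q - a) q| <= B by move=> q hq; apply/ltW/hlt.
  have habs := abs_sum hle; have hge := abs_sum_ge0 hle; rewrite /= in habs hge.
  have hstrict : \sum_(x <- s) (x - a) ^+ 2 < B * QE e s.
    rewrite -subr_gt0 hQE habs lt_def hge andbT; apply/eqP => h0.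
    have := abs_sum_eq0 hle h0; rewrite /= => hall.
    have hx0 : forall q, q \in s -> q - a = 0.
      move=> q hq; have := hall q hq; move/eqP; rewrite mulf_eq0 => /orP [/eqP/normr0P/eqP //|].
      by rewrite subr_eq0 => /eqP hh; have := hlt q hq; rewrite -hh ltxx.
    have : \sum_(x <- s) (x - a) ^+ 2 = 0.
      by rewrite big_seq big1 // => q hq; rewrite hx0 // expr0n.
    rewrite hM => h1; have : 0 <= \sum_i (((deg e i)%:R : R) - a) ^+ 2.
      by apply: sumr_ge0 => i _; exact: sqr_ge0.
    lra.
  have hdd : 2^-1 * ((maxdeg e)%:R - (mindeg e)%:R) ^+ 2 <= \sum_i (((deg e i)%:R : R) - a) ^+ 2.
    rewrite himax himin; case: (eqVneq imax imin) => [->|hne].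
      by rewrite subrr expr0n /= mulr0; apply: sumr_ge0 => i _; exact: sqr_ge0.
    rewrite (bigD1 imax) //= (bigD1 imin) /=; last by rewrite eq_sym.
    set u := ((deg e imax)%:R : R); set w := ((deg e imin)%:R : R).
    have h1 : 0 <= \sum_(i | (i != imax) && (i != imin)) (((deg e i)%:R : R) - a) ^+ 2.
      by apply: sumr_ge0 => i _; exact: sqr_ge0.
    have h2 : 0 <= 2^-1 * (u + w - 2 * a) ^+ 2 by apply: mulr_ge0; rewrite ?invr_ge0 ?ler0n ?sqr_ge0.
    have h3 : (u - a) ^+ 2 + (w - a) ^+ 2 = 2^-1 * (u - w) ^+ 2 + 2^-1 * (u + w - 2 * a) ^+ 2.
      by field.
    lra.
  rewrite ltr_pdivrMr // -/D -/a -/B.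
  apply: le_lt_trans (_ : \sum_(x <- s) (x - a) ^+ 2 < QE e s * B); last by rewrite mulrC.
  by rewrite hM lerD2l.
- move=> hreg; set r := deg e ord0.
  have hr : forall x, deg e x = r by move=> x; apply: hreg.
  have hrpos : (0 < r)%N := hdpos ord0.
  have hcard : (0 < #|{: 'I_m.+1}|)%N by rewrite card_ord.
  have [imax himax] := bigop.eq_bigmax (fun x => deg e x) hcard.
  rewrite -/(maxdeg e) hr in himax.
  have hDr : D = m.+1%:R * r%:R.
    by rewrite -hD (eq_bigr (fun _ => (r%:R : R))) ?sumr_const ?card_ord ?mulr_natl // => i _; rewrite hr.
  have ha : a = r%:R by apply: (mulfI (_ : m.+1%:R != 0 :> R)); rewrite ?pnatr_eq0 // hna hDr.
  have hM' : \sum_(x <- s) (x - a) ^+ 2 = m.+1%:R * r%:R.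
    rewrite hM big1 ?addr0 // => i _; by rewrite hr ha subrr expr0n.
  have hle : forall q, q \in s -> `|(fun q => q - a) q| <= r%:R.
    move=> q hq; have [h0 h1] := spec_range esym eirr hQ hq; rewrite himax in h1.
    by rewrite /= ha ler_norml; apply/andP; split; lra.
  have habs := abs_sum hle; have hge := abs_sum_ge0 hle; rewrite /= in habs hge.
  rewrite -hQE hM' in habs.
  have hr0 : (0 : R) < r%:R by rewrite ltr0n.
  split.
    have : m.+1%:R * r%:R <= r%:R * QE e s by lra.
    by rewrite mulrC ler_pM2l.
  split.
    move=> hE.
    have h0 : \sum_(x <- s) `|x - a| * (r%:R - `|x - a|) = 0 by rewrite -habs hE; ring.
    have hall := abs_sum_eq0 hle h0; rewrite /= in hall.
    have roots3 : forall q, q \in s -> q * (q - r%:R) * (q - (r%:R + r%:R)) = 0.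
      move=> q hq; have := L3 (hall q hq); rewrite ha => h1; rewrite -h1; ring.
    have hA3 := A3 esym eirr hr hQ roots3.
    exact: (bip_struct esym eirr hr (nbr_eq esym hr hA3) hc hrpos).
  move=> hiso.
  have h0 : \sum_(x <- s) `|x - a| * (r%:R - `|x - a|) = 0.
    rewrite big_seq big1 // => q hq; apply: L4; first by rewrite ler0n.
    have := iso_roots eirr hr hQ hq hm hiso.2.
    by rewrite ha => h1; rewrite -h1; ring.
  have : r%:R * QE e s = m.+1%:R * r%:R by lra.
  by rewrite mulrC => /(mulIf (lt0r_neq0 hr0)).
Qed.
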